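(* Consider an $N$-player quadratic game with step sizes $\gamma_1,\ldots,\gamma_N>0$, associated block matrix $W$, and disturbed gradient-based learning dynamics as described in the context, in which player $i$'s gradient is corrupted by an arbitrary disturbance. Then a player $j\neq i$ is disturbance decoupled from player $i$ if and only if $$\sum_{p\in\mathcal{P}^k_{ij}}\ \prod_{l=0}^{k-1}W_{v_{l+1},v_l}=0\quad\text{for all integers } 0<k<n,$$ where for each path $p=(i,v_1,\ldots,v_{k-1},j)\in\mathcal{P}^k_{ij}$ we set $v_0=i$, $v_k=j$, and the product denotes the ordered matrix product $W_{v_k,v_{k-1}}W_{v_{k-1},v_{k-2}}\cdots W_{v_1,v_0}$ (the path weight).
   Context: There are $N$ players, indexed by $[N]=\{1,\ldots,N\}$; player $\ell$ has action $x_\ell\in\mathbb{R}^{n_\ell}$, $n=\sum_{\ell=1}^N n_\ell$, and $x=(x_1,\ldots,x_N)\in\mathbb{R}^n$ is the joint action. A quadratic game has costs $f_\ell(x)=\tfrac12 x_\ell^\top P_\ell x_\ell + x_\ell^\top\big(\sum_{m\neq \ell}P_{\ell m}x_m + r_\ell\big)$ with $P_\ell\in\mathbb{R}^{n_\ell\times n_\ell}$ symmetric, $P_{\ell m}\in\mathbb{R}^{n_\ell\times n_m}$, $r_\ell\in\mathbb{R}^{n_\ell}$. Each player $\ell$ has step size $\gamma_\ell>0$ and updates $x_\ell^{k+1}=x_\ell^k-\gamma_\ell\big(D_\ell f_\ell(x^k)+d_\ell^k\big)$, where $D_\ell f_\ell=\partial f_\ell/\partial x_\ell$ and $d_\ell^k\in\mathbb{R}^{n_\ell}$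 is an arbitrary additive disturbance. Let $W\in\mathbb{R}^{n\times n}$ be the block matrix with blocks $W_{\ell\ell}=I_{n_\ell}-\gamma_\ell P_\ell$ and $W_{\ell m}=-\gamma_\ell P_{\ell m}$ ($\ell\neq m$), $\Gamma=\mathrm{blkdiag}(\gamma_1 I_{n_1},\ldots,\gamma_N I_{n_N})$, $\bar r=(r_1,\ldots,r_N)$. Let $\mathcal{D}_i=\{d\in\mathbb{R}^n : d_m=0\ \forall m\neq i\}$. The uncorrupted and corrupted dynamics are $x^{k+1}=Wx^k-\Gamma\bar r$ and $y^{k+1}=Wy^k-\Gamma\bar r-\Gamma d^k$. Player $j\neq i$ is disturbance decoupled from player $i$ if for every initial $x^0$, with $y^0=x^0$, one has $y_j^k=x_j^k$ for all $k\ge0$ and all disturbance sequences with $d^k\in\mathcal{D}_i$. Game graph: the directed graph on node set $[N]$ with an edge $(m,\ell)$ (from $m$ to $\ell$) of weight $W_{\ell m}\in\mathbb{R}^{n_\ell\times n_m}$ whenever $W_{\ell m}\neq0$, and with a self-loop $(\ell,\ell)$ of weight $W_{\ell\ell}$ at every node. A path $(i,v_1,\ldots,v_{k-1},j)$ is a sequence of $k+1$ nodes in which each consecutive pair is an edge (self-loops allowed); $\mathcal{P}^k_{ij}$ is the set of all such paths starting at $i$ and ending at $j$ with $k+1$ nodes. *)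

(* Defs.v *)
From HB Require Import structures.
From mathcomp Require Import all_boot all_order all_algebra.
Set Implicit Arguments. Unset Strict Implicit. Unset Printing Implicit Defensive.
Import Order.TTheory GRing.Theory Num.Theory.
Local Open Scope ring_scope.

Section QuadGame.
Variables (R : realFieldType) (N : nat) (dims : 'I_N -> nat).
(* P l m is the block P_{lm} (for l <> m) and P l l is P_l. *)
Variable P : forall l m : 'I_N, 'M[R]_(dims l, dims m).
Variable r : forall l : 'I_N, 'cV[R]_(dims l).
Variable gamma : 'I_N -> R.

Definition Wblk (l m : 'I_N) : 'M[R]_(dims l, dims m) :=
  \matrix_(a, b) (((l == m) && (val a == val b))%:R) - gamma l *: P l m.

Definition joint := forall l : 'I_N, 'cV[R]_(dims l).

Definition step (x dk : joint) : joint :=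
  fun l => \sum_(m < N) Wblk l m *m x m - gamma l *: r l - gamma l *: dk l.

Fixpoint traj (x0 : joint) (d : nat -> joint) (k : nat) : joint :=
  match k with
  | 0 => x0
  | k'.+1 => step (traj x0 d k') (d k')
  end.

Definition zero_dist : nat -> joint := fun _ l => 0.

Definition supported_on (i : 'I_N) (d : nat -> joint) : Prop :=
  forall k (m : 'I_N), m != i -> d k m = 0.

Definition disturbance_decoupled (i j : 'I_N) : Prop :=
  forall (x0 : joint) (d : nat -> joint), supported_on i d ->
    forall k, traj x0 d k j = traj x0 zero_dist k j.

Definition edge (a b : 'I_N) : bool := (a == b) || (Wblk b a != 0).

(* weight of the path (v, s_1, ..., s_q, j): W_{j s_q} ... W_{s_1 v} *)
Fixpoint pathW (j : 'I_N) (v : 'I_N) (s : seq 'I_N) : 'M[R]_(dims j, dims v) :=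
  match s with
  | [::] => Wblk j v
  | w :: s' => pathW j w s' *m Wblk w v
  end.

End QuadGame.

(* Main.v *)
Require Import Defs.
From HB Require Import structures.
From mathcomp Require Import all_boot all_order all_algebra.
Import Order.TTheory GRing.Theory Num.Theory.
Local Open Scope ring_scope.


Lemma CH_span (F : fieldType) n (A : 'M[F]_n) m :
  exists c : 'I_n -> F, A ^+ m = \sum_(l < n) c l *: A ^+ l.
Proof.
move: A; case: n => [|n'] A.
  by exists (fun _ => 0); rewrite big_ord0; apply/matrixP => -[].
pose cp := char_poly A; pose q := 'X^m %% cp.
have hq : (size q <= n'.+1)%N.
  have := ltn_modpN0 ('X^m) (monic_neq0 (char_poly_monic A)).
  by rewrite size_char_poly.
exists (fun l => q`_l).
have -> : A ^+ m = horner_mx A q.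
  have e : horner_mx A ('X^m) = A ^+ m by rewrite rmorphXn /= horner_mx_X.
  rewrite -e (divp_eq ('X^m) cp) rmorphD rmorphM /= Cayley_Hamilton mulr0 add0r.
  done.
rewrite [q in LHS](_ : q = \poly_(l < n'.+1) q`_l); last first.
  apply/polyP => l; rewrite coef_poly; case: ltnP => // h.
  by rewrite nth_default // (leq_trans hq h).
rewrite poly_def rmorph_sum; apply: eq_bigr => l _.
by rewrite -mul_polyC rmorphM /= horner_mx_C rmorphXn /= horner_mx_X -mulmxE mul_scalar_mx.
Qed.

Section Main.
Variables (R : realFieldType) (N : nat) (dims : 'I_N -> nat)
  (P : forall l m : 'I_N, 'M[R]_(dims l, dims m))
  (r : forall l : 'I_N, 'cV[R]_(dims l)) (gamma : 'I_N -> R).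
Local Notation n := (\sum_(l < N) dims l)%N.
Local Notation W := (Wblk P gamma).

Definition Wbig : 'M[R]_n := @mxblock R N N dims dims (fun l m => W l m).
Definition blk (A : 'M[R]_n) l m : 'M[R]_(dims l, dims m) :=
  @submxblock R N N dims dims A l m.
Definition vcol (X : forall l, 'cV[R]_(dims l)) : 'cV[R]_n := @mxcol R N dims 1 X.
Definition scol (X : 'cV[R]_n) l : 'cV[R]_(dims l) := @submxcol R N dims 1 X l.

Lemma blk_mul (A B : 'M[R]_n) l m : blk (A *m B) l m = \sum_k blk A l k *m blk B k m.
Proof.
rewrite /blk -[A](@submxblockK _ _ _ dims dims) -[B](@submxblockK _ _ _ dims dims).
by rewrite mul_mxblock !mxblockK; apply: eq_bigr => k _; rewrite !mxblockK.
Qed.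

Lemma scol_mul (A : 'M[R]_n) X l : scol (A *m vcol X) l = \sum_k blk A l k *m X k.
Proof.
rewrite /scol /vcol /blk -[A](@submxblockK _ _ _ dims dims).
rewrite mul_mxblock_mxrow mxcolK; apply: eq_bigr => k _; by rewrite !mxblockK.
Qed.

Lemma blk1 l m : blk 1 l m = \matrix_(a, b) ((l == m) && (val a == val b))%:R.
Proof.
apply/matrixP => a b; rewrite /blk /submxblock /mxsub !mxE.
by rewrite -tagnat.eq_Rank.
Qed.

Lemma blkZ c A l m : blk (c *: A) l m = c *: blk A l m.
Proof. by apply/matrixP => a b; rewrite /blk /submxblock /mxsub !mxE. Qed.

Lemma blkW l m : blk Wbig l m = W l m.
Proof. exact: mxblockK. Qed.

Lemma scolK X l : scol (vcol X) l = X l.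
Proof. exact: mxcolK. Qed.


Lemma pathW_nopath (j v : 'I_N) (t : seq 'I_N) :
  ~~ path (edge P gamma) v (rcons t j) -> pathW P gamma j v t = 0.
Proof.
elim: t v => [|w t IH] v /=.
  by rewrite andbT /edge negb_or negbK => /andP[_ /eqP].
rewrite negb_and => /orP[|/IH -> ]; last by rewrite mul0mx.
by rewrite /edge negb_or negbK => /andP[_ /eqP ->]; rewrite mulmx0.
Qed.

Lemma blkpow (j i : 'I_N) k :
  blk (Wbig ^+ k.+1) j i = \sum_(t : k.-tuple 'I_N) pathW P gamma j i t.
Proof.
elim: k i => [|k IH] i.
  rewrite expr1 blkW (big_pred1 [tuple]) //= => t.
  by apply/esym/eqP/tuple0.
rewrite exprSr -mulmxE blk_mul.
rewrite (reindex (fun p : 'I_N * k.-tuple 'I_N => [tuple of p.1 :: p.2])) /=; last first.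
  apply: onW_bij; exists (fun t => (thead t, [tuple of behead t])).
    by case=> v s; rewrite theadE; congr pair; apply: val_inj.
  by move=> t; rewrite [in RHS](tuple_eta t).
rewrite -(pair_bigA _ (fun v (s : k.-tuple 'I_N) => pathW P gamma j i (v :: s))) /=.
apply: eq_bigr => v _; rewrite IH mulmx_suml blkW.
by apply: eq_bigr.
Qed.

Lemma blkpow_path (j i : 'I_N) k :
  blk (Wbig ^+ k.+1) j i =
  \sum_(t : k.-tuple 'I_N | path (edge P gamma) i (rcons t j)) pathW P gamma j i t.
Proof.
rewrite blkpow [RHS]big_mkcond; apply: eq_bigr => t _.
by case: ifP => // /negbT /pathW_nopath ->.
Qed.


Definition Err x0 d k := vcol (fun l => traj P r gamma x0 d k l - traj P r gamma x0 (@zero_dist R N dims) k l).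
Definition Dv (d : nat -> joint R dims) s := vcol (fun l => gamma l *: d s l).

Lemma err_step x0 d k : Err x0 d k.+1 = Wbig *m Err x0 d k - Dv d k.
Proof.
apply/(@mxcolP _ _ dims) => l.
rewrite -/(scol _ l) submxcolB -/(scol _ l) -/(scol _ l).
rewrite /Err /Dv !scolK scol_mul /= /step /zero_dist scaler0 subr0.
under [X in _ = X - _]eq_bigr do rewrite blkW mulmxBr.
rewrite sumrB.
set a := \sum_(m < N) _; set b := \sum_(m < N) _.
by rewrite opprB (addrAC a) addrA subrK addrAC.
Qed.


Lemma err_form x0 d k :
  Err x0 d k = - \sum_(s < k) Wbig ^+ (k - s.+1) *m Dv d s.
Proof.
elim: k => [|k IH].
  rewrite big_ord0 oppr0; apply/matrixP => a b.
  by rewrite /Err /vcol /mxcol !mxE /= subrr ?mxE.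
rewrite err_step IH mulmxN mulmx_sumr big_ord_recr /= subnn expr0 mul1mx.
rewrite opprD; congr (- _ - _); apply: eq_bigr => s _.
by rewrite mulmxA; congr (_ *m _); rewrite mulmxE -exprS subSS subnSK.
Qed.


Lemma scol_err x0 d k j :
  traj P r gamma x0 d k j - traj P r gamma x0 (@zero_dist R N dims) k j =
  - \sum_(s < k) \sum_l blk (Wbig ^+ (k - s.+1)) j l *m (gamma l *: d s l).
Proof.
rewrite -[LHS](scolK (fun l => traj P r gamma x0 d k l -
   traj P r gamma x0 (@zero_dist R N dims) k l)) -/(Err x0 d k) err_form.
rewrite /scol submxcolN submxcol_sum; congr (- _); apply: eq_bigr => s _.
by rewrite -/(scol _ j) scol_mul.
Qed.

Lemma decoupled_iff (i j : 'I_N) (Hji : j != i) (Hg : forall l, 0 < gamma l) :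
  disturbance_decoupled P r gamma i j <-> forall m, blk (Wbig ^+ m) j i = 0.
Proof.
split => [H m | H x0 d Hd k]; last first.
  apply/eqP; rewrite -subr_eq0 scol_err big1 ?oppr0 // => s _.
  apply: big1 => l _; have [->|nli] := eqVneq l i; first by rewrite H mul0mx.
  by rewrite Hd // scaler0 mulmx0.
apply/matrixP => a b.
pose u : 'cV[R]_(dims i) := delta_mx b 0.
pose d : nat -> joint R dims := fun s l =>
  if s == 0%N then (gamma l)^-1 *: (blk 1 l i *m u) else 0.
have Hd : supported_on i d.
  move=> s l nli; rewrite /d; case: eqP => // _.
  rewrite blk1 (negbTE nli); apply/matrixP => a' b'.
  by rewrite !mxE big1 ?mulr0 // => c _; rewrite mxE mul0r.
have := H (fun _ => 0) d Hd m.+1.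
move/eqP; rewrite -subr_eq0 scol_err oppr_eq0 big_ord_recl /=.
rewrite [X in _ + X]big1 ?addr0; last first.
  move=> s _; apply: big1 => l _; by rewrite /d /= scaler0 mulmx0.
under eq_bigr do rewrite /d /= scalerA mulfV ?scale1r ?(gt_eqF (Hg _)) // mulmxA.
rewrite -mulmx_suml -blk_mul mulmx1 subn1 /= => /eqP /matrixP /(_ a 0).
by rewrite -colE !mxE.
Qed.

End Main.
Theorem theorem1 (R : realFieldType) (N : nat) (dims : 'I_N -> nat)
  (P : forall l m : 'I_N, 'M[R]_(dims l, dims m))
  (r : forall l : 'I_N, 'cV[R]_(dims l)) (gamma : 'I_N -> R)
  (HPsym : forall l, (P l l)^T = P l l)
  (Hgamma : forall l, 0 < gamma l)
  (i j : 'I_N) (Hji : j != i) :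
  disturbance_decoupled P r gamma i j <->
  (forall k : nat, (0 < k < \sum_(l < N) dims l)%N ->
     \sum_(t : (k.-1).-tuple 'I_N | path (edge P gamma) i (rcons t j))
        pathW P gamma j i t = 0).
Proof.
apply: iff_trans (@decoupled_iff R N dims P r gamma i j Hji Hgamma) _.
split.
  move=> H k /andP[k0 _].
  by rewrite -blkpow_path prednK.
move=> H m.
have [c ->] := @CH_span _ _ (@Wbig R N dims P gamma) m.
rewrite /blk submxblock_sum big1 // => l _.
have := @blkZ R N dims (c l) (@Wbig R N dims P gamma ^+ l) j i; rewrite /blk => ->.
case: l => -[|l] hl /=.
  rewrite expr0; have := @blk1 R N dims j i; rewrite /blk (negbTE Hji) => ->.
  by apply/matrixP => a b; rewrite !mxE mulr0.
have := @blkpow_path R N dims P gamma j i l; rewrite /blk => ->.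
by rewrite (H l.+1) ?scaler0 // hl.
Qed.
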